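(* Let $\|\cdot\|$ be a norm on $\mathbb{R}^n$ and let $F:\mathbb{R}^n\to\mathbb{R}^n$ be continuous and monotone with respect to $\|\cdot\|$ with monotonicity parameter $c\ge0$. Then for all $\alpha>0$, the resolvent $J_{\alpha F}=(\mathrm{Id}+\alpha F)^{-1}$ satisfies $\mathrm{Lip}(J_{\alpha F})\le\frac{1}{1+\alpha c}$.
   Context: $\mathrm{Lip}(T)$ denotes the smallest constant $L$ with $\|T(x)-T(y)\|\le L\|x-y\|$ for all $x,y$. A weak pairing (WP) on $\mathbb{R}^n$ is a map $[\![\cdot,\cdot]\!]:\mathbb{R}^n\times\mathbb{R}^n\to\mathbb{R}$ that is subadditive and continuous in its first argument, satisfies $[\![\alpha x,y]\!]=[\![x,\alpha y]\!]=\alpha[\![x,y]\!]$ for $\alpha\ge0$ and $[\![-x,-y]\!]=[\![x,y]\!]$, $[\![x,x]\!]>0$ for $x\ne0$, and $|[\![x,y]\!]|\le[\![x,x]\!]^{1/2}[\![y,y]\!]^{1/2}$; it is compatible with a norm if $[\![x,x]\!]=\|x\|^2$. WPs are assumed to also satisfy Deimling's inequality $[\![x,y]\!]\le\|y\|\lim_{h\to0^+}h^{-1}(\|y+hx\|-\|y\|)$ and the curve norm derivative formula ($\|x(t)\|D^+\|x(t)\|=[\![\dot x(t),x(t)]\!]$ a.e. for differentiable curves). $F$ is monotone with monotonicity parameter $c\ge0$ w.r.t. $\|\cdot\|$ if for some compatible WP, $-[\![-(F(x)-F(y)),x-y]\!]\ge c\|x-y\|^2$ for all $x,y$. *)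

(* Defs.v *)
From HB Require Import structures.
From mathcomp Require Import all_boot all_order all_algebra.
From mathcomp Require Import all_classical all_reals all_analysis.
Set Implicit Arguments. Unset Strict Implicit. Unset Printing Implicit Defensive.
Import Order.TTheory GRing.Theory Num.Theory.
Import numFieldNormedType.Exports.
Local Open Scope classical_set_scope.
Local Open Scope ring_scope.

Section Defs.
Variables (R : realType) (n : nat).
Local Notation V := 'rV[R]_n.

Definition is_norm (nrm : V -> R) : Prop :=
  [/\ forall x, 0 <= nrm x,
      forall x, nrm x = 0 -> x = 0,
      forall (a : R) x, nrm (a *: x) = `|a| * nrm x
    & forall x y, nrm (x + y) <= nrm x + nrm y].

Definition is_weak_pairing (wp : V -> V -> R) : Prop :=
  [/\ forall x1 x2 y, wp (x1 + x2) y <= wp x1 y + wp x2 y,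
      forall y, continuous (fun x => wp x y),
      forall (a : R) x y, 0 <= a -> (wp (a *: x) y = a * wp x y /\ wp x (a *: y) = a * wp x y),
      forall x y, wp (- x) (- y) = wp x y
    & (forall x, x != 0 -> 0 < wp x x) /\
      forall x y, `|wp x y| <= Num.sqrt (wp x x) * Num.sqrt (wp y y)].

Definition wp_compatible (nrm : V -> R) (wp : V -> V -> R) : Prop :=
  forall x, wp x x = nrm x ^+ 2.

Definition deimling_ineq (nrm : V -> R) (wp : V -> V -> R) : Prop :=
  forall x y, wp x y <=
    nrm y * lim ((fun h : R => h^-1 * (nrm (y + h *: x) - nrm y)) @ 0^'+).

Definition dini_upper_right (g : R -> R) (t : R) : \bar R :=
  limf_esup (fun h : R => ((g (t + h) - g t) / h)%:E) 0^'+.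

Definition curve_norm_derivative (nrm : V -> R) (wp : V -> V -> R) : Prop :=
  forall x : R -> V, (forall t, derivable x t 1) ->
    {ae (@lebesgue_measure R), forall t,
       ((nrm (x t))%:E * dini_upper_right (fun s => nrm (x s)) t)%E
       = (wp ('D_1 x t) (x t))%:E}.

Definition WP_for (nrm : V -> R) (wp : V -> V -> R) : Prop :=
  [/\ is_weak_pairing wp, deimling_ineq nrm wp & curve_norm_derivative nrm wp].

Definition monotone_wrt (nrm : V -> R) (F : V -> V) (c : R) : Prop :=
  0 <= c /\
  exists wp : V -> V -> R,
    [/\ WP_for nrm wp, wp_compatible nrm wp
      & forall x y, - wp (- (F x - F y)) (x - y) >= c * nrm (x - y) ^+ 2].

Definition lip_le (nrm : V -> R) (T : V -> V) (L : R) : Prop :=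
  forall x y, nrm (T x - T y) <= L * nrm (x - y).

End Defs.

(* Main.v *)
Require Import Defs.
From HB Require Import structures.
From mathcomp Require Import all_boot all_order all_algebra.
From mathcomp Require Import all_classical all_reals all_analysis.
From mathcomp Require Import ring lra.
Import Order.TTheory GRing.Theory Num.Theory.
Import numFieldNormedType.Exports.
Local Open Scope classical_set_scope.
Local Open Scope ring_scope.

Section Norms.
Variables (R : realType) (n : nat) (N : 'rV[R]_n -> R).
Hypotheses (N0 : forall x, 0 <= N x) (Ndef : forall x, N x = 0 -> x = 0)
  (NZ : forall (a : R) x, N (a *: x) = `|a| * N x)
  (ND : forall x y, N (x + y) <= N x + N y).

Lemma Nzero : N 0 = 0.
Proof. by rewrite -(scale0r 0) NZ normr0 mul0r. Qed.

Lemma NN x : N (- x) = N x.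
Proof. by rewrite -scaleN1r NZ normrN normr1 mul1r. Qed.

Lemma NB x y : N (x - y) = N (y - x).
Proof. by rewrite -NN opprB. Qed.

Lemma Nsum (I : Type) (r : seq I) (P : pred I) (f : I -> 'rV[R]_n) :
  N (\sum_(i <- r | P i) f i) <= \sum_(i <- r | P i) N (f i).
Proof.
elim/big_rec2: _ => [|i y1 y2 _ h]; first by rewrite Nzero.
by apply: le_trans (ND _ _) _; rewrite lerD2l.
Qed.

Lemma coord_le (x : 'rV[R]_n) i : `|x ord0 i| <= `|x|.
Proof.
have /mapP[j Hj ->] : `|x ord0 i| \in [seq `|x k.1 k.2| | k : 'I_1 * 'I_n].
  by apply/mapP; exists (ord0, i) => //=; rewrite mem_enum.
by rewrite [leRHS]/Num.norm /= mx_normrE; apply/bigmax_geP; right => /=; exists j.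
Qed.

Lemma N_upper : exists C, 0 <= C /\ forall x, N x <= C * `|x|.
Proof.
exists (\sum_(j < n) N 'e_j); split; first by apply: sumr_ge0.
move=> x; rewrite {1}(row_sum_delta x).
have := @Nsum _ (index_enum _) xpredT (fun j => x 0 j *: delta_mx 0 j). move=> H. apply: (le_trans H); rewrite mulr_suml; apply: ler_sum => j _.
by rewrite NZ mulrC ler_wpM2l // coord_le.
Qed.

Lemma N_lip : exists C, 0 <= C /\ forall x y, `|N x - N y| <= C * `|x - y|.
Proof.
have [C [C0 HC]] := N_upper; exists C; split => // x y.
apply: le_trans (HC (x - y)).
have h1 : N x <= N y + N (x - y) by rewrite addrC; apply: le_trans (ND _ _); rewrite subrK.
have h2 : N y <= N x + N (x - y).
  by rewrite NB addrC; apply: le_trans (ND _ _); rewrite subrK.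
rewrite ler_norml; apply/andP; split; lra.
Qed.

Lemma N_cont : continuous N.
Proof.
have [C [C0 HC]] := N_lip.
move=> x; apply/(@cvgrPdist_le _ _ _ _ (nbhs_filter x)) => e e0.
have C1 : 0 < C + 1 by rewrite ltr_wpDl.
have eC : 0 < e / (C + 1) by rewrite divr_gt0.
have hb : nbhs x (ball x (e / (C + 1))) by apply: nbhsx_ballx.
apply: filterS hb => y; rewrite -ball_normE /= => Hy.
apply: le_trans (HC _ _) _.
apply: (@le_trans _ _ ((C + 1) * `|x - y|)).
  by rewrite ler_wpM2r // lerDl.
rewrite -ler_pdivlMl // mulrC; apply: ltW; done.
Qed.

Lemma bounded_of (A : set 'rV[R]_n) (B : R) :
  (forall x, A x -> `|x| <= B) -> bounded_set A.
Proof.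
move=> HB; exists B; split; first by rewrite num_real.
move=> M BM x Ax; apply: le_trans (HB _ Ax) _; exact: ltW.
Qed.

Lemma closed_Nle (x0 : 'rV[R]_n) (r : R) : closed [set x | N (x - x0) <= r].
Proof.
have hc : continuous (fun x : 'rV[R]_n => N (x - x0)).
  have hs : continuous (fun y : 'rV[R]_n => y - x0).
    move=> x; apply: (@cvgB _ _ _ _ (nbhs_filter x)); first exact: cvg_id.
    exact: (@cvg_cst _ _ _ _ (nbhs_filter x)).
  move=> x; exact: (continuous_comp (hs x) (N_cont _)).
have := proj1 (continuous_closedP _) hc _ (@closed_le _ r).
by [].
Qed.

Lemma N_lower : exists2 m, 0 < m & forall x, m * `|x| <= N x.
Proof.
pose S := [set x : 'rV[R]_n | `|x| = 1].
have Sc : compact S.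
  apply: bounded_closed_compact; first by apply: (@bounded_of _ 1) => x ->.
  have -> : S = Num.norm @^-1` [set y : R | y <= 1] `&` Num.norm @^-1` [set y : R | 1 <= y].
    apply/seteqP; split => x /=; first by move=> ->.
    by move=> [h1 h2]; apply/eqP; rewrite eq_le h1 h2.
  apply: closedI.
    exact: (proj1 (continuous_closedP _) norm_continuous _ (@closed_le _ 1)).
  exact: (proj1 (continuous_closedP _) norm_continuous _ (@closed_ge _ 1)).
have [[x0 Sx0]|S0] := pselect (S !=set0); last first.
  exists 1 => // x; rewrite mul1r.
  have [x00|xn0] := eqVneq `|x| 0; first by rewrite x00.
  exfalso; apply: S0; exists (`|x|^-1 *: x); rewrite /S /= normrZ normfV normr_id.
  by rewrite mulVf.
have hcS : {within S, continuous N} by apply: continuous_subspaceT; exact: N_cont.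
have [c Sc' Hc] := EVT_min_rV (ex_intro _ x0 Sx0) Sc hcS.
have c1 : `|c| = 1 by move: Sc'; rewrite inE.
have Nc : 0 < N c.
  rewrite lt0r N0 andbT; apply/eqP => /Ndef c0; move: c1; rewrite c0 normr0.
  by move/eqP; rewrite eq_sym oner_eq0.
exists (N c) => // x.
have [x00|xn0] := eqVneq `|x| 0; first by rewrite x00 mulr0.
have : N c <= N (`|x|^-1 *: x).
  by apply: Hc; rewrite inE /S /= normrZ normfV normr_id mulVf.
rewrite NZ normfV normr_id => h.
rewrite -ler_pdivlMr; first by rewrite mulrC.
by rewrite lt0r xn0 normr_ge0.
Qed.

Lemma UC (G : 'rV[R]_n -> 'rV[R]_n) (K : set 'rV[R]_n) (e : R) :
  continuous G -> compact K -> 0 < e ->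
  exists2 d, 0 < d & forall x y, K x -> K y -> `|x - y| < d -> N (G x - G y) < e.
Proof.
move=> Gc Kc e0.
pose phi := fun p : 'rV[R]_n * 'rV[R]_n => N (G p.1 - G p.2).
pose psi := fun p : 'rV[R]_n * 'rV[R]_n => `|p.1 - p.2|.
have phic : continuous phi.
  move=> p.
  have h1 : {for p, continuous (fun q : 'rV[R]_n * 'rV[R]_n => G q.1)}.
    exact: (continuous_comp (@cvg_fst _ _ _ _ _) (Gc _)).
  have h2 : {for p, continuous (fun q : 'rV[R]_n * 'rV[R]_n => G q.2)}.
    exact: (continuous_comp (@cvg_snd _ _ _ _ _) (Gc _)).
  have h3 : {for p, continuous (fun q : 'rV[R]_n * 'rV[R]_n => G q.1 - G q.2)}.
    exact: (continuousB h1 h2).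
  exact: (continuous_comp h3 (N_cont _)).
have psic : continuous psi.
  move=> p.
  have h3 : {for p, continuous (fun q : 'rV[R]_n * 'rV[R]_n => q.1 - q.2)}.
    exact: (continuousB (@cvg_fst _ _ _ _ _) (@cvg_snd _ _ _ _ _)).
  exact: (continuous_comp h3 (@norm_continuous _ _ _)).
pose C := (K `*` K) `&` [set p | e <= phi p].
have Cc : compact C.
  apply: compact_closedI; first exact: compact_setX.
  have := proj1 (continuous_closedP phi) phic _ (@closed_ge _ e).
  by [].
have [C0|C0] := pselect (C !=set0); last first.
  exists 1 => // x y Kx Ky _; rewrite ltNge; apply/negP => he; apply: C0.
  by exists (x, y).
have psiC : {within C, continuous psi} by apply: continuous_subspaceT.
have [p0 Cp0 Hp0] := compact_EVT_min C0 Cc psiC.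
move: (Cp0); rewrite inE => -[_ /= Hp0e].
exists (psi p0).
  rewrite /psi lt0r normr_ge0 andbT normr_eq0 subr_eq0; apply/negP => /eqP h.
  by move: Hp0e; rewrite /phi h subrr Nzero leNgt e0.
move=> x y Kx Ky hxy; rewrite ltNge; apply/negP => he.
have : psi p0 <= psi (x, y) by apply: Hp0; rewrite inE.
by rewrite leNgt hxy.
Qed.

Variable G : 'rV[R]_n -> 'rV[R]_n.
Hypothesis Gc : continuous G.
Hypothesis Gacc : forall x y (h : R), 0 <= h ->
  (1 + h) * N (x - y) <= N ((x - y) + h *: (G x - G y)).

Lemma UCN (r e : R) : 0 < e -> exists2 d, 0 < d &
  forall x y, N x <= r -> N y <= r -> N (x - y) <= d -> N (G x - G y) <= e.
Proof.
move=> e0.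
have [m m0 Hm] := N_lower.
pose K := [set x : 'rV[R]_n | N (x - 0) <= r].
have Kc : compact K.
  apply: bounded_closed_compact; last exact: closed_Nle.
  apply: (@bounded_of _ (r / m)) => x; rewrite /K /= subr0 => Nx.
  rewrite ler_pdivlMr // mulrC; exact: le_trans (Hm x) Nx.
have [d d0 Hd] := @UC G K e Gc Kc e0.
exists (m * d / 2); first by rewrite divr_gt0 // mulr_gt0.
move=> x y Nx Ny Nxy; apply: ltW; apply: Hd; rewrite /K /= ?subr0 //.
have h1 := le_trans (Hm (x - y)) Nxy.
have h2 : `|x - y| <= d / 2.
  by rewrite -(ler_pM2l m0) mulrA.
apply: le_lt_trans h2 _; rewrite ltr_pdivrMr // ltr_pMr //; lra.
Qed.

Definition step (h : R) z := z - h *: G z.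
Definition xs (h : R) k := iter k (step h) 0.

Lemma xsS h k : xs h k.+1 = step h (xs h k).
Proof. by rewrite /xs iterS. Qed.

Lemma KI (h : R) a b : 0 <= h ->
  (1 + h) * N (step h a - step h b) <=
  N (a - b) + h * N (G (step h a) - G a) + h * N (G (step h b) - G b).
Proof.
move=> h0; apply: (le_trans (Gacc _ _ _ h0)).
have -> : step h a - step h b + h *: (G (step h a) - G (step h b)) =
   (a - b) + h *: (G (step h a) - G a) - h *: (G (step h b) - G b).
  by rewrite /step; apply/rowP => i; rewrite !mxE; ring.
apply: le_trans (ND _ _) _; rewrite NN !NZ ger0_norm //.
by rewrite lerD2r; apply: le_trans (ND _ _) _; rewrite NZ ger0_norm.
Qed.

Lemma BL (h : R) a p : 0 <= h ->
  (1 + h) * N (step h a - p) <=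
  N (a - p) + h * N (G (step h a) - G a) + h * N (G p).
Proof.
move=> h0; apply: (le_trans (Gacc _ _ _ h0)).
have -> : step h a - p + h *: (G (step h a) - G p) =
   (a - p) + h *: (G (step h a) - G a) - h *: (G p).
  by rewrite /step; apply/rowP => i; rewrite !mxE; ring.
apply: le_trans (ND _ _) _; rewrite NN !NZ ger0_norm //.
by rewrite lerD2r; apply: le_trans (ND _ _) _; rewrite NZ ger0_norm.
Qed.

Lemma step_props (h Rr M w : R) : 0 <= h ->
  (forall x, N x <= Rr -> N (G x) <= M) -> h * M <= 1 ->
  (forall x y, N x <= Rr + 1 -> N y <= Rr + 1 -> N (x - y) <= h * M ->
     N (G x - G y) <= w) ->
  forall a, N a <= Rr ->
  [/\ N (step h a - a) <= h * M, N (step h a) <= Rr + 1 &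
      N (G (step h a) - G a) <= w].
Proof.
move=> h0 HM hM Hmod a Na.
have e1 : step h a - a = - (h *: G a) by rewrite /step addrAC subrr add0r.
have d1 : N (step h a - a) <= h * M.
  by rewrite e1 NN NZ ger0_norm // ler_wpM2l // HM.
have d2 : N (step h a) <= Rr + 1.
  have := ND (step h a - a) a; rewrite subrK => h2; lra.
split => //; apply: Hmod => //; lra.
Qed.

Lemma traj_bound (h Rr M w : R) : 0 <= h -> N (G 0) + 1 <= Rr ->
  (forall x, N x <= Rr -> N (G x) <= M) -> h * M <= 1 -> w <= 1 ->
  (forall x y, N x <= Rr + 1 -> N y <= Rr + 1 -> N (x - y) <= h * M ->
     N (G x - G y) <= w) ->
  forall k, N (xs h k) <= Rr.
Proof.
move=> h0 HR HM hM w1 Hmod; elim => [|k IH].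
  rewrite /xs /= Nzero; have := N0 (G 0); lra.
have [d1 d2 d3] := @step_props h Rr M w h0 HM hM Hmod _ IH.
rewrite xsS.
have := @BL h (xs h k) 0 h0; rewrite !subr0 => hb.
have hG := N0 (G 0).
have hN := N0 (step h (xs h k)).
have hw := N0 (G (step h (xs h k)) - G (xs h k)).
nra.
Qed.

Lemma shift (h Rr M w : R) : 0 <= h -> N (G 0) + 1 <= Rr ->
  (forall x, N x <= Rr -> N (G x) <= M) -> h * M <= 1 -> w <= 1 ->
  (forall x y, N x <= Rr + 1 -> N y <= Rr + 1 -> N (x - y) <= h * M ->
     N (G x - G y) <= w) ->
  forall j k, (1 + h) ^+ k * (N (xs h (k + j) - xs h k) - 2 * w)
              <= N (xs h j - xs h 0).
Proof.
move=> h0 HR HM hM w1 Hmod j.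
have w0 : 0 <= w.
  have hG := N0 (G 0); have hM0 : 0 <= h * M.
    by apply: mulr_ge0 => //; apply: le_trans (HM 0 _); rewrite ?Nzero; lra.
  have := Hmod 0 0; rewrite !subrr !Nzero; apply; lra.
elim => [|k IH].
  by rewrite expr0 mul1r add0n; lra.
have tb := @traj_bound h Rr M w h0 HR HM hM w1 Hmod.
have [_ _ da] := @step_props h Rr M w h0 HM hM Hmod _ (tb (k + j)%N).
have [_ _ db] := @step_props h Rr M w h0 HM hM Hmod _ (tb k).
have := @KI h (xs h (k + j)) (xs h k) h0.
rewrite -!xsS addSn => hk.
have hP : 0 <= (1 + h) ^+ k by apply: exprn_ge0; lra.
rewrite exprS.
have s1 : (1 + h) * (N (xs h (k + j).+1 - xs h k.+1) - 2 * w) <=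
          N (xs h (k + j) - xs h k) - 2 * w.
  have e1 : h * N (G (step h (xs h (k + j))) - G (xs h (k + j))) <= h * w.
    exact: ler_wpM2l.
  have e2 : h * N (G (step h (xs h k)) - G (xs h k)) <= h * w.
    exact: ler_wpM2l.
  rewrite !xsS in hk *; lra.
apply: le_trans IH; rewrite -mulrA mulrCA; exact: ler_wpM2l.
Qed.

Lemma tele (h : R) k j :
  xs h (k + j) - xs h k = - (h *: \sum_(i < j) G (xs h (k + i))).
Proof.
elim: j => [|j IH]; first by rewrite addn0 subrr big_ord0 scaler0 oppr0.
rewrite addnS xsS /step big_ord_recr /= scalerDr opprD -IH.
by rewrite addrAC.
Qed.

Lemma dist0 (h Rr M w : R) : 0 <= h -> N (G 0) + 1 <= Rr ->
  (forall x, N x <= Rr -> N (G x) <= M) -> h * M <= 1 -> w <= 1 ->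
  (forall x y, N x <= Rr + 1 -> N y <= Rr + 1 -> N (x - y) <= h * M ->
     N (G x - G y) <= w) ->
  forall j, N (xs h j - xs h 0) <= j%:R * (h * M).
Proof.
move=> h0 HR HM hM w1 Hmod; elim => [|j IH].
  by rewrite subrr Nzero mul0r.
have tb := @traj_bound h Rr M w h0 HR HM hM w1 Hmod.
have [d1 _ _] := @step_props h Rr M w h0 HM hM Hmod _ (tb j).
rewrite xsS.
have := ND (step h (xs h j) - xs h j) (xs h j - xs h 0).
rewrite addrA subrK => hh.
rewrite -natr1; lra.
Qed.

Lemma ball_compact (r : R) : compact [set x : 'rV[R]_n | N (x - 0) <= r].
Proof.
have [m m0 Hm] := N_lower.
apply: bounded_closed_compact; last exact: closed_Nle.
apply: (@bounded_of _ (r / m)) => x; rewrite /= subr0 => Nx.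
rewrite ler_pdivlMr // mulrC; exact: le_trans (Hm x) Nx.
Qed.

Lemma bern (h : R) k : 0 <= h -> 1 + k%:R * h <= (1 + h) ^+ k.
Proof.
move=> h0; elim: k => [|k IH]; first by rewrite mul0r expr0 addr0.
rewrite exprS -natr1.
have hk : 0 <= k%:R * h by apply: mulr_ge0.
nra.
Qed.

Lemma approx (eps : R) : 0 < eps ->
  exists x, N x <= N (G 0) + 1 /\ N (G x) <= eps.
Proof.
move=> eps0.
set Rr := N (G 0) + 1.
have hG0 := N0 (G 0).
pose K1 := [set x : 'rV[R]_n | N (x - 0) <= Rr].
have K1c : compact K1 := ball_compact Rr.
have GNc : {within K1, continuous (fun x => N (G x))}.
  apply: continuous_subspaceT => x.
  exact: (continuous_comp (Gc x) (N_cont _)).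
have K10 : K1 !=set0 by exists 0; rewrite /K1 /= subr0 Nzero /Rr; lra.
have [c _ Hc] := EVT_max_rV K10 K1c GNc.
set M := N (G c) + 1.
have HM : forall x, N x <= Rr -> N (G x) <= M.
  move=> x Nx; have := Hc x; rewrite inE /K1 /= subr0 => /(_ Nx).
  rewrite /M; lra.
have M0 : 0 < M by rewrite /M; have := N0 (G c); lra.
have eps4 : 0 < eps / 4 by rewrite divr_gt0.
have [d' d'0 Hd'] := @UCN (Rr + 1) (eps / 4) eps4.
pose w := Num.min 1 (Num.min (d' / 4) (eps / 8)).
have w0 : 0 < w by rewrite /w !lt_min ltr01 !divr_gt0.
have w1 : w <= 1 by rewrite /w ge_min lexx.
have w2 : w <= d' / 4 by rewrite /w !ge_min lexx orbT.
have w3 : w <= eps / 8 by rewrite /w !ge_min lexx !orbT.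
have [d1 d10 Hd1] := @UCN (Rr + 1) w w0.
pose q := Num.min d1 1.
have q0 : 0 < q by rewrite /q lt_min d10 ltr01.
have q1 : q <= d1 by rewrite /q ge_min lexx.
have q2 : q <= 1 by rewrite /q ge_min lexx orbT.
pose m := Num.Def.archi_bound (M / q).
have hm : M / q < m%:R by apply: archi_boundP; rewrite divr_ge0 // ltW.
have mpos : 0 < m%:R :> R by apply: le_lt_trans hm; rewrite divr_ge0 // ltW.
pose h := (m%:R : R)^-1.
have h0 : 0 < h by rewrite invr_gt0.
have hm1 : h * m%:R = 1 by rewrite mulVf // gt_eqF.
have hMq : h * M <= q.
  rewrite mulrC ler_pdivrMr // mulrC; apply: ltW.
  by rewrite -ltr_pdivrMr.
have hM : h * M <= 1 by apply: le_trans q2.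
have Hmod : forall x y, N x <= Rr + 1 -> N y <= Rr + 1 -> N (x - y) <= h * M ->
    N (G x - G y) <= w.
  move=> x y Nx Ny Nxy; apply: Hd1 => //; apply: le_trans Nxy _.
  exact: le_trans q1.
have h0' : 0 <= h := ltW h0.
have HR : N (G 0) + 1 <= Rr by [].
have tb := @traj_bound h Rr M w h0' HR HM hM w1 Hmod.
pose mn := Num.min d' eps.
have mn0 : 0 < mn by rewrite /mn lt_min d'0 eps0.
have mn1 : mn <= d' by rewrite /mn ge_min lexx.
have mn2 : mn <= eps by rewrite /mn ge_min lexx orbT.
pose T := 4 * M / mn.
pose t := Num.Def.archi_bound T.
have ht : T < t%:R by apply: archi_boundP; rewrite divr_ge0 // ?mulr_ge0 // ltW.
pose k := (t * m)%N.
pose P := (1 + h) ^+ k.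
have hP : T < P.
  apply: lt_le_trans ht _; apply: le_trans (@bern h k h0'); rewrite /k natrM.
  rewrite -mulrA [m%:R * h]mulrC hm1 mulr1; lra.
have P0 : 0 < P by apply: le_lt_trans hP; rewrite divr_ge0 // ?mulr_ge0 // ltW.
have hMP : 4 * M <= mn * P.
  have e : 4 * M = T * mn by rewrite /T divfK // gt_eqF.
  by rewrite e [mn * P]mulrC; apply: ltW; rewrite ltr_pM2r.
have Dbound : forall i, (i <= m)%N ->
    N (xs h (k + i) - xs h k) <= 2 * w + mn / 4.
  move=> i im.
  have s1 := @shift h Rr M w h0' HR HM hM w1 Hmod i k.
  have s2 := @dist0 h Rr M w h0' HR HM hM w1 Hmod i.
  have s3 : i%:R * (h * M) <= M.
    rewrite mulrA; rewrite -[leRHS]mul1r; apply: ler_wpM2r; first exact: ltW.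
    have him : i%:R <= m%:R :> R by rewrite ler_nat.
    nra.
  have s4 : P * (4 * (N (xs h (k + i) - xs h k) - 2 * w)) <= P * mn.
    rewrite mulrCA; rewrite [P * mn]mulrC.
    apply: le_trans hMP; rewrite ler_pM2l //; apply: (le_trans s1); lra.
  rewrite ler_pM2l // in s4; lra.
have Gbound : forall i : 'I_m,
    N (G (xs h (k + i)) - G (xs h k)) <= eps / 4.
  move=> i; apply: Hd'.
  - by apply: le_trans (tb _) _; lra.
  - by apply: le_trans (tb _) _; lra.
  - have := Dbound i (ltnW (ltn_ord i)); lra.
exists (xs h k); split; first exact: tb.
have eG : G (xs h k) = - (xs h (k + m) - xs h k) -
    h *: \sum_(i < m) (G (xs h (k + i)) - G (xs h k)).
  rewrite tele opprK sumrB scalerBr sumr_const card_ord -scaler_nat scalerA hm1 scale1r.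
  by rewrite opprB addrC subrK.
rewrite eG; apply: le_trans (ND _ _) _; rewrite !NN NZ ger0_norm //.
have e1 := Dbound m (leqnn m).
have e2 : N (\sum_(i < m) (G (xs h (k + i)) - G (xs h k))) <= (eps / 4) *+ m.
  have Hs := @Nsum _ (index_enum 'I_m) xpredT
    (fun i : 'I_m => G (xs h (k + i)) - G (xs h k)).
  apply: (le_trans Hs).
  apply: (@le_trans _ _ (\sum_(i < m) eps / 4)).
    by apply: ler_sum => i _; exact: Gbound.
  by rewrite sumr_const card_ord.
have e3 : h * N (\sum_(i < m) (G (xs h (k + i)) - G (xs h k))) <= eps / 4.
  apply: le_trans (ler_wpM2l h0' e2) _.
  by rewrite -mulr_natr mulrCA hm1 mulr1.
lra.
Qed.

Lemma surjG : exists x, G x = 0.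
Proof.
set Rr := N (G 0) + 1.
pose K1 := [set x : 'rV[R]_n | N (x - 0) <= Rr].
have K1c : compact K1 := ball_compact Rr.
have GNc : {within K1, continuous (fun x => N (G x))}.
  apply: continuous_subspaceT => x.
  exact: (continuous_comp (Gc x) (N_cont _)).
have K10 : K1 !=set0.
  by exists 0; rewrite /K1 /= subr0 Nzero /Rr; have := N0 (G 0); lra.
have [c _ Hc] := EVT_min_rV K10 K1c GNc.
exists c; apply: Ndef; apply/eqP; rewrite eq_le N0 andbT.
rewrite leNgt; apply/negP => hc.
have [x [Nx Gx]] := @approx (N (G c) / 2) (divr_gt0 hc (ltr0n _ 2)).
have : N (G c) <= N (G x) by apply: Hc; rewrite inE /K1 /= subr0.
lra.
Qed.

End Norms.

Theorem lemma22 (R : realType) (n : nat) (nrm : 'rV[R]_n -> R)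
    (F : 'rV[R]_n -> 'rV[R]_n) (c : R) :
  is_norm nrm -> continuous F -> monotone_wrt nrm F c ->
  forall alpha : R, 0 < alpha ->
  exists J : 'rV[R]_n -> 'rV[R]_n,
    [/\ cancel J (fun x => x + alpha *: F x),
        cancel (fun x => x + alpha *: F x) J
      & lip_le nrm J (1 / (1 + alpha * c))].
Proof.
move=> [N0 Ndef NZ ND] Fc [c0 [wp [[WP _ _] compat mono]]] alpha a0.
have [sub _ hom _ [_ CS]] := WP.
have Acc : forall x y mu, 0 <= mu ->
    (1 + mu * c) * nrm (x - y) <= nrm ((x - y) + mu *: (F x - F y)).
  move=> x y mu mu0.
  set d := x - y; set b := F x - F y; set e := d + mu *: b.
  have h1 : wp d d <= wp e d + wp (mu *: (- b)) d.
    by have := sub e (mu *: - b) d; rewrite /e scalerN addrK.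
  have [h2 _] := hom mu (- b) d mu0.
  have h3 := mono x y; rewrite -/d -/b in h3.
  have h4 := compat d.
  have h5 : wp e d <= nrm e * nrm d.
    apply: le_trans (ler_norm _) _; apply: le_trans (CS e d) _.
    by rewrite !compat !sqrtr_sqr !ger0_norm.
  have hd := N0 d; have he := N0 e.
  have hmc : 0 <= mu * c by apply: mulr_ge0.
  rewrite h2 h4 in h1.
  have [d0|dpos] := eqVneq (nrm d) 0.
    by rewrite d0 mulr0.
  have dp : 0 < nrm d by rewrite lt0r dpos hd.
  nra.
pose Phi := fun x => x + alpha *: F x.
have Lip : forall x y, (1 + alpha * c) * nrm (x - y) <= nrm (Phi x - Phi y).
  move=> x y; have := Acc x y alpha (ltW a0).
  suff -> : x - y + alpha *: (F x - F y) = Phi x - Phi y by [].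
  by rewrite /Phi; apply/rowP => i; rewrite !mxE; ring.
have surj : forall u, exists x, Phi x = u.
  move=> u.
  pose G := fun x => Phi x - u.
  have Gc : continuous G.
    move=> x; apply: continuousB; last exact: cst_continuous.
    apply: continuousD; first exact: cvg_id.
    exact: (@continuousZl_tmp _ _ _ F alpha x (Fc x)).
  have Gacc : forall x y (h : R), 0 <= h ->
      (1 + h) * nrm (x - y) <= nrm ((x - y) + h *: (G x - G y)).
    move=> x y h h0.
    have h1 : 0 < 1 + h by lra.
    have := Acc x y (h * alpha / (1 + h)) (divr_ge0 (mulr_ge0 h0 (ltW a0)) (ltW h1)).
    have -> : x - y + h *: (G x - G y) = (1 + h) *: (x - y +
        (h * alpha / (1 + h)) *: (F x - F y)).
      rewrite /G /Phi; apply/rowP => i; rewrite !mxE; field.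
      by rewrite gt_eqF.
    rewrite NZ ger0_norm ?(ltW h1) // => hh.
    have hc : 0 <= h * alpha / (1 + h) * c.
      by apply: mulr_ge0 => //; apply: divr_ge0; [apply: mulr_ge0 => //; exact: ltW | exact: ltW].
    have hd := N0 (x - y).
    have : nrm (x - y) <= nrm (x - y + h * alpha / (1 + h) *: (F x - F y)) by nra.
    by move=> hh2; rewrite ler_pM2l.
  have [x Gx] := @surjG _ _ nrm N0 Ndef NZ ND G Gc Gacc.
  by exists x; apply/eqP; rewrite -subr_eq0; apply/eqP.
pose J := fun u => projT1 (cid (surj u)).
have JK : forall u, Phi (J u) = u by move=> u; rewrite /J; case: (cid _).
have inj : injective Phi.
  move=> x y hxy; have := Lip x y; rewrite hxy subrr (@Nzero _ _ nrm NZ) => hh.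
  have hp : 0 < 1 + alpha * c by have := mulr_ge0 (ltW a0) c0; lra.
  apply/eqP; rewrite -subr_eq0; apply/eqP; apply: Ndef.
  apply/eqP; rewrite eq_le N0 andbT.
  have := N0 (x - y); nra.
exists J; split.
- exact: JK.
- by move=> x; apply: inj; rewrite JK.
- move=> u v.
  have hp : 0 < 1 + alpha * c by have := mulr_ge0 (ltW a0) c0; lra.
  have := Lip (J u) (J v); rewrite !JK => hh.
  by rewrite mul1r ler_pdivlMl.
Qed.
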